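(* The numbers $D_2(\boldsymbol m)$, $\boldsymbol m\in\mathscr F$, defined by $D_2(\boldsymbol 0):=1$ and $D_2(\boldsymbol m):=\sum_{\mathfrak u\subseteq{\rm supp}(\boldsymbol m),\,0\ne|\mathfrak u|\le2}D_2(\boldsymbol m-\boldsymbol e_{\mathfrak u})$ for $\boldsymbol m\ne\boldsymbol 0$ (with $\boldsymbol e_{\mathfrak u}=\sum_{j\in\mathfrak u}\boldsymbol e_j$), satisfy $$D_2(\boldsymbol m)\le|\boldsymbol m|!\,a_{|\boldsymbol m|}\quad\text{for all }\boldsymbol m\in\mathscr F,\qquad a_k:=\frac{(1+\sqrt3)^{k+1}-(1-\sqrt3)^{k+1}}{2^{k+1}\sqrt3},\ k\ge0.$$
   Context: $\mathscr F$ is the set of finitely supported multi-indices in $\mathbb N_0^{\mathbb N}$; ${\rm supp}(\boldsymbol m)=\{j:m_j\ne0\}$, $|\boldsymbol m|=\sum m_j$, $\boldsymbol e_j$ the $j$th unit multi-index. *)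

(* Defs.v *)
From HB Require Import structures.
From mathcomp Require Import all_boot all_order all_algebra.
From mathcomp Require Import reals.
Set Implicit Arguments. Unset Strict Implicit. Unset Printing Implicit Defensive.
Import Order.TTheory GRing.Theory Num.Theory.

(* A finitely supported multi-index m in F is represented by a finite
   sequence s : seq nat, with m_j = nth 0 s j (m_j = 0 for j >= size s).
   Every element of F has such a representation (trailing zeros irrelevant). *)

Definition mabs (m : seq nat) : nat := sumn m.

Definition msupp (m : seq nat) : {set 'I_(size m)} :=
  [set j : 'I_(size m) | nth 0%N m j != 0%N].

Definition msub (m : seq nat) (u : {set 'I_(size m)}) : seq nat :=
  [seq (nth 0%N m (val j) - (j \in u))%N | j <- enum 'I_(size m)].

(* D_2 computed with fuel; each recursive step lowers |m| by at least 1,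
   so fuel |m| suffices (at fuel 0 we have |m| = 0, i.e. m = 0). *)
Fixpoint D2f (fuel : nat) (m : seq nat) : nat :=
  match fuel with
  | 0 => 1%N
  | k.+1 =>
    if mabs m == 0%N then 1%N
    else (\sum_(u : {set 'I_(size m)} |
                 (u \subset msupp m) && (0 < #|u| <= 2)%N) D2f k (msub u))%N
  end.

Definition D2 (m : seq nat) : nat := D2f (mabs m) m.

Local Open Scope ring_scope.

Definition aseq (R : realType) (k : nat) : R :=
  ((1 + Num.sqrt 3) ^+ k.+1 - (1 - Num.sqrt 3) ^+ k.+1)
    / (2 ^+ k.+1 * Num.sqrt 3).

(* Main.v *)
Require Import Defs.
From HB Require Import structures.
From mathcomp Require Import all_boot all_order all_algebra.
From mathcomp Require Import reals.
Import Order.TTheory GRing.Theory Num.Theory.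

Fixpoint cc (n : nat) : nat :=
  match n with
  | 0 => 1
  | 1 => 1
  | (k.+1 as p).+1 => p.+1 * cc p + 'C(p.+1, 2) * cc k
  end.

Lemma sumn_ord (m : seq nat) : sumn m = \sum_(j < size m) nth 0 m j.
Proof. by rewrite sumnE (big_nth 0) big_mkord. Qed.

Lemma mabs_msub (m : seq nat) (u : {set 'I_(size m)}) :
  u \subset msupp m -> mabs (msub u) = mabs m - #|u|.
Proof.
move=> su; rewrite /mabs /msub sumnE big_map big_enum /= sumn_ord.
rewrite -sum1_card big_mkcond /=.
have -> : \sum_(j < size m) nth 0 m j =
   \sum_(j < size m) ((nth 0 m j - (j \in u)) + (if j \in u then 1 else 0)).
  apply: eq_bigr => j _; case: ifP => ju /=; last by rewrite subn0 addn0.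
  have := subsetP su j ju; rewrite inE addn1 => nz; rewrite subn1 prednK //.
  by rewrite lt0n.
by rewrite big_split /= -big_mkcond addnK.
Qed.

Lemma card_msupp (m : seq nat) : #|msupp m| <= mabs m.
Proof.
rewrite /mabs sumn_ord -sum1_card big_mkcond /=; apply: leq_sum => j _.
rewrite inE; case: ifP => //; by rewrite lt0n.
Qed.

Lemma sum_sets (T : finType) (S : {set T}) (F : nat -> nat) :
  \sum_(u : {set T} | (u \subset S) && (0 < #|u| <= 2)) F #|u| =
  #|S| * F 1 + 'C(#|S|, 2) * F 2.
Proof.
rewrite (bigID (fun u : {set T} => #|u| == 1)) /=.
have -> : \sum_(i : {set T} | ((i \subset S) && (0 < #|i| <= 2)) && (#|i| == 1)) F #|i|
   = \sum_(i in [set A : {set T} | A \subset S & #|A| == 1]) F 1.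
  apply: eq_big => [A|A]; last by move/andP=> [_ /eqP ->].
  rewrite inE; case: (A \subset S) => //=; case: eqP => [->//|]; by rewrite andbF.
have -> : \sum_(i : {set T} | ((i \subset S) && (0 < #|i| <= 2)) && (#|i| != 1)) F #|i|
   = \sum_(i in [set A : {set T} | A \subset S & #|A| == 2]) F 2.
  apply: eq_big => [A|A]; last first.
    move/andP=> [/andP[_ /andP[h1 h2]] h3]; congr F.
    apply/eqP; rewrite eqn_leq h2 /=; move: h1 h3; case: #|A| => [|[|]] //.
  rewrite inE; case: (A \subset S) => //=; case: #|A| => [|[|[|]]] //.
rewrite !sum_nat_const !cards_draws bin1 //.
Qed.

Lemma cc_pos n : 0 < cc n.
Proof.
suff: forall n, 0 < cc n /\ 0 < cc n.+1 by move=> /(_ n) [].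
elim=> [|k [h1 h2]] //; split=> //=.
by rewrite addn_gt0 muln_gt0 h2.
Qed.


Lemma cc_step n : n.+1 * cc n + 'C(n.+1, 2) * cc n.-1 <= cc n.+1.
Proof. by case: n => [|k] //=; rewrite muln1 addn0. Qed.

Lemma D2f_bound k m : D2f k m <= cc (mabs m).
Proof.
elim: k m => [|k IH] m /=; first exact: cc_pos.
case: eqP => [->//|/eqP nz].
apply: (@leq_trans (\sum_(u : {set 'I_(size m)} | (u \subset msupp m) &&
      (0 < #|u| <= 2)) cc (mabs m - #|u|))).
  apply: leq_sum => u /andP[su _]; rewrite -mabs_msub //; exact: IH.
rewrite (sum_sets _ _ (fun x => cc (mabs m - x))) /=; move: (card_msupp m) nz.
case: (mabs m) => [|n] // hs _.
rewrite !subSS subn0.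
apply: leq_trans (cc_step n); rewrite subn1 -subn1.
by apply: leq_add; apply: leq_mul => //; apply: leq_bin2l.
Qed.

From mathcomp Require Import ring lra.
Local Open Scope ring_scope.
Lemma aseq_rec (R : realType) k :
  aseq R k.+2 = aseq R k.+1 + aseq R k / 2.
Proof.
rewrite /aseq.
set s := Num.sqrt (3 : R).
have s2 : s ^+ 2 = 3 by rewrite sqr_sqrtr // ler0n.
have s0 : s != 0 by rewrite sqrtr_eq0 -ltNge ltr0n.
have ex : forall x : R, x = 1 + s \/ x = 1 - s ->
    x ^+ k.+3 = 2 * x ^+ k.+2 + 2 * x ^+ k.+1.
  move=> x hx; have hx2 : x ^+ 2 = 2 * x + 2.
    apply/eqP; rewrite -subr_eq0; case: hx => ->.
      have -> : (1 + s) ^+ 2 - (2 * (1 + s) + 2) = s ^+ 2 - 3 by ring.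
      by rewrite s2 subrr.
    have -> : (1 - s) ^+ 2 - (2 * (1 - s) + 2) = s ^+ 2 - 3 by ring.
    by rewrite s2 subrr.
  rewrite exprS exprS mulrA -expr2 hx2 exprS; ring.
rewrite (ex (1 + s)) ?(ex (1 - s)); [|by right|by left].
rewrite !exprS; field.
have two0 : (2 : R) != 0 by rewrite pnatr_eq0.
by rewrite s0 /= expf_neq0.
Qed.

Lemma aseq0 (R : realType) : aseq R 0 = 1.
Proof.
rewrite /aseq; set s := Num.sqrt (3 : R).
have s0 : s != 0 by rewrite sqrtr_eq0 -ltNge ltr0n.
rewrite !expr1; field; have two0 : (2 : R) != 0 by rewrite pnatr_eq0.
by [].

Qed.

Lemma aseq1 (R : realType) : aseq R 1 = 1.
Proof.
rewrite /aseq; set s := Num.sqrt (3 : R).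
have s0 : s != 0 by rewrite sqrtr_eq0 -ltNge ltr0n.
rewrite !expr2; field; have two0 : (2 : R) != 0 by rewrite pnatr_eq0.
by [].

Qed.

Lemma cc_aseq (R : realType) n : ((cc n)%:R : R) = (n`!)%:R * aseq R n.
Proof.
suff: forall n, ((cc n)%:R : R) = (n`!)%:R * aseq R n /\
               ((cc n.+1)%:R : R) = (n.+1`!)%:R * aseq R n.+1 by move=> /(_ n) [].
elim=> [|k [h0 h1]].
  by rewrite /= aseq0 aseq1 !mulr1.
split=> //.
have hC : ('C(k.+2, 2) * 2 = k.+2 * k.+1)%N.
  by rewrite -[2%N]/(2`!) bin_ffact !ffactnS ffactn0 muln1.
have hC' : ('C(k.+2, 2)%:R : R) = (k.+2)%:R * (k.+1)%:R / 2.
  have two0 : (2 : R) != 0 by rewrite pnatr_eq0.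
  by rewrite -natrM -hC natrM mulfK.
rewrite [cc _]/= natrD !natrM h1 h0 hC' aseq_rec !factS !natrM.
by field.
Qed.

Theorem lemmaA2 (R : realType) (m : seq nat) :
  ((D2 m)%:R : R) <= ((mabs m)`!)%:R * aseq R (mabs m).
Proof.
by rewrite -cc_aseq ler_nat; apply: D2f_bound.
Qed.
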